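(* Let $r>1$ and integers $N\ge1$, $K\ge2$. For $p=(p^1,\dots,p^K)$ let $z^i=(\sum_{j=1}^ip^j)^N-(\sum_{j=1}^{i-1}p^j)^N$ and $f(p)=\frac{p^K}{z^K}\sum_{i=1}^{K-1}\frac{z^i}{\sum_{j=i}^Kp^j}$. Then the supremum of $f(p)$ over all $p$ with $rp^K\ge1$, $\sum_ip^i=1$, $p^i>0$ for all $i$ equals the supremum of $f(p)$ over all $p$ with $rp^K=1$, $\sum_ip^i=1$, $p^i>0$ for all $i$. *)

(* Defs.v *)
From HB Require Import structures.
From mathcomp Require Import all_boot all_order all_algebra.
From mathcomp Require Import all_classical all_reals ereal.
Set Implicit Arguments. Unset Strict Implicit. Unset Printing Implicit Defensive.
Import Order.TTheory GRing.Theory Num.Theory.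
Local Open Scope ring_scope.

(* A vector p = (p^1,...,p^K) is represented by p : nat -> R, using the
   1-based indices 1..K (values outside are irrelevant). *)

Definition zvec {R : realType} (N : nat) (p : nat -> R) (i : nat) : R :=
  (\sum_(1 <= j < i.+1) p j) ^+ N - (\sum_(1 <= j < i) p j) ^+ N.

Definition fobj {R : realType} (N K : nat) (p : nat -> R) : R :=
  p K / zvec N p K *
  \sum_(1 <= i < K) (zvec N p i / \sum_(i <= j < K.+1) p j).

Definition feas_ge {R : realType} (r : R) (K : nat) : set (nat -> R) :=
  [set p | 1 <= r * p K /\ \sum_(1 <= i < K.+1) p i = 1 /\
           (forall i, (1 <= i <= K)%N -> 0 < p i)].

Definition feas_eq {R : realType} (r : R) (K : nat) : set (nat -> R) :=
  [set p | r * p K = 1 /\ \sum_(1 <= i < K.+1) p i = 1 /\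
           (forall i, (1 <= i <= K)%N -> 0 < p i)].

(* Main.v *)
Require Import Defs.
From HB Require Import structures.
From mathcomp Require Import all_boot all_order all_algebra.
From mathcomp Require Import all_classical all_reals ereal.
From mathcomp Require Import ring lra zify.
Import Order.TTheory GRing.Theory Num.Theory.
Local Open Scope ring_scope.

Lemma geomG (R : realType) (N : nat) (x : R) :
  1 - x ^+ N = (1 - x) * \sum_(i < N) x ^+ i.
Proof. by rewrite -opprB subrX1 -mulNr opprB. Qed.

Lemma geomG_ge1 (R : realType) (N : nat) (x : R) : (1 <= N)%N -> 0 <= x ->
  1 <= \sum_(i < N) x ^+ i.
Proof.
case: N => // n _ hx; rewrite big_ord_recl expr0 lerDl.
by apply: sumr_ge0 => i _; apply: exprn_ge0.
Qed.

Lemma coef (R : realType) (N : nat) (u U : R) : (1 <= N)%N -> 0 < u -> u <= U -> U < 1 ->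
  (1 - u) / (1 - u ^+ N) <= (1 - U) / (1 - U ^+ N) * (U / u) ^+ N.
Proof.
move=> hN hu huU hU.
have hU0 : 0 < U by apply: lt_le_trans huU.
rewrite !geomG expr_div_n.
have gu := @geomG_ge1 R N u hN (ltW hu); have gU := @geomG_ge1 R N U hN (ltW hU0).
set Gu := \sum_(i < N) u ^+ i in gu *; set GU := \sum_(i < N) U ^+ i in gU *.
have hun : 0 < u ^+ N by apply: exprn_gt0.
have e : (1 - U) / ((1 - U) * GU) * (U ^+ N / u ^+ N) - (1 - u) / ((1 - u) * Gu)
   = (U ^+ N * Gu - u ^+ N * GU) / (GU * Gu * u ^+ N).
  field; rewrite (gt_eqF hun) /=; apply/and4P; split; apply/negP => /eqP h; lra.
rewrite -subr_ge0 e; apply: divr_ge0; last first.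
  by apply: mulr_ge0; [apply: mulr_ge0; lra | lra].
rewrite /Gu /GU !mulr_sumr -sumrB; apply: sumr_ge0 => i _; rewrite subr_ge0.
have hi := ltnW (ltn_ord i).
have e1 : U ^+ N = U ^+ i * U ^+ (N - i) by rewrite -exprD subnKC.
have e2 : u ^+ N = u ^+ i * u ^+ (N - i) by rewrite -exprD subnKC.
rewrite e1 e2.
have a1 : 0 <= u ^+ i * U ^+ i by apply: mulr_ge0; apply: exprn_ge0; lra.
have a2 : u ^+ (N - i) <= U ^+ (N - i) by apply: lerXn2r; rewrite ?nnegrE; lra.
nra.
Qed.

Lemma psum_ge0 (R : realType) (K : nat) (p : nat -> R)
  (hp : forall i, (1 <= i <= K)%N -> 0 < p i) (a b : nat) :
  (1 <= a)%N -> (b <= K.+1)%N -> 0 <= \sum_(a <= j < b) p j.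
Proof.
move=> ha hb; rewrite big_nat_cond; apply: sumr_ge0 => j /andP[/andP[h1 h2] _].
by apply/ltW/hp; lia.
Qed.

Arguments psum_ge0 {R K p}.

Ltac nlia := repeat match goal with H : ?T |- _ =>
  lazymatch T with
  | is_true (leq _ _) => fail
  | is_true (andb (leq _ _) (leq _ _)) => fail
  | _ => clear H
  end end; lia.

Lemma key (R : realType) (r : R) (N K : nat)
  (hr : 1 < r) (hN : (1 <= N)%N) (hK : (2 <= K)%N) (p : nat -> R) :
  feas_ge r K p -> exists2 q, feas_eq r K q & fobj N K p <= fobj N K q.
Proof.
case=> [hrt [hsum hpos]].
set t := p K; set u := \sum_(1 <= j < K) p j.
have hut : u + t = 1 by rewrite -hsum big_nat_recr //=; nlia.
have ht0 : 0 < t by apply: hpos; nlia.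
have hr0 : 0 < r by apply: lt_trans hr; apply: ltr01.
set s := r^-1.
have hs0 : 0 < s by rewrite invr_gt0.
have hs1 : s < 1 by rewrite invf_lt1.
have hst : s <= t by rewrite /s -[r^-1]mulr1 ler_pdivrMl.
have hu0 : 0 < u.
  rewrite /u big_ltn; last by nlia.
  have := psum_ge0 hpos 2 K isT (leqW (leqnn K)).
  have : 0 < p 1 by apply: hpos; nlia.
  lra.
set U := 1 - s.
have huU : u <= U by rewrite /U; lra.
have hU0 : 0 < U by rewrite /U; lra.
have hU1 : U < 1 by rewrite /U; lra.
set lam := U / u.
have hlam1 : 1 <= lam by rewrite /lam ler_pdivlMr // mul1r.
have hlam0 : 0 < lam by lra.
pose q := fun j => if j == K then s else lam * p j.
have hqs a b : (b <= K)%N -> \sum_(a <= j < b) q j = lam * \sum_(a <= j < b) p j.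
  move=> hb; rewrite mulr_sumr; apply: eq_big_nat => j /andP[_ hj].
  have hjK : j != K by rewrite neq_ltn (leq_trans hj hb).
  by rewrite /q (negbTE hjK).
have hqK : q K = s by rewrite /q eqxx.
have hlu : lam * u = U by rewrite /lam divfK // gt_eqF.
have hqtot : \sum_(1 <= j < K.+1) q j = 1.
  rewrite big_nat_recr /=; last exact: ltnW hK.
  by rewrite hqs // -/u hlu hqK /U subrK.
exists q.
  split; first by rewrite hqK /s mulfV // gt_eqF.
  split; first exact: hqtot.
  move=> i hi; rewrite /q; case: eqP => _; first exact: hs0.
  by apply: mulr_gt0 => //; apply: hpos.
have hSp i : (1 <= i <= K)%N -> 0 <= \sum_(1 <= j < i) p j <= u.
  move=> hi; apply/andP; split; first by apply: (psum_ge0 hpos) => //; nlia.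
  rewrite /u [X in _ <= X](big_cat_nat (n := i)) /=; [|nlia|nlia].
  rewrite lerDl; apply: (psum_ge0 hpos); nlia.
have hDp i : (1 <= i <= K)%N ->
   \sum_(i <= j < K.+1) p j = 1 - \sum_(1 <= j < i) p j.
  move=> hi; rewrite -hsum [X in _ = X - _](big_cat_nat (n := i)) /=; [|nlia|nlia].
  by apply/eqP; rewrite eq_sym subr_eq addrC.
have hDq i : (1 <= i < K)%N ->
   \sum_(i <= j < K.+1) q j = 1 - lam * \sum_(1 <= j < i) p j.
  move=> hi; rewrite -hqtot [X in _ = X - _](big_cat_nat (n := i)) /=; [|nlia|nlia].
  rewrite (hqs 1 i); [by apply/eqP; rewrite eq_sym subr_eq addrC|nlia].
have hzp i : (1 <= i < K)%N -> 0 <= zvec N p i.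
  move=> hi; rewrite /zvec subr_ge0 big_nat_recr /=; last by nlia.
  have /andP[h0 _] := hSp i ltac:(nlia).
  apply: lerXn2r; rewrite ?nnegrE //.
    by apply: addr_ge0 => //; apply/ltW/hpos; nlia.
  by rewrite lerDl; apply/ltW/hpos; nlia.
have hzq i : (1 <= i < K)%N -> zvec N q i = lam ^+ N * zvec N p i.
  move=> hi; have e1 : (i.+1 <= K)%N by nlia.
  have e2 : (i <= K)%N by nlia.
  rewrite /zvec !hqs //.
  by rewrite !exprMn mulrBr.
have hterm i : (1 <= i < K)%N ->
   lam ^+ N * (zvec N p i / \sum_(i <= j < K.+1) p j)
     <= zvec N q i / \sum_(i <= j < K.+1) q j.
  move=> hi; rewrite hzq // hDp; last by nlia.
  rewrite hDq // mulrA.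
  have /andP[h0 h1] := hSp i ltac:(nlia).
  have h2 : lam * \sum_(1 <= j < i) p j <= U.
    by rewrite -hlu; apply: ler_wpM2l => //; lra.
  have h3 : \sum_(1 <= j < i) p j <= lam * \sum_(1 <= j < i) p j by apply: ler_peMl.
  apply: ler_wpM2l.
    by apply: mulr_ge0; [apply: exprn_ge0; lra | apply: hzp].
  rewrite lef_pV2 ?posrE; lra.
have hSum : lam ^+ N * \sum_(1 <= i < K) (zvec N p i / \sum_(i <= j < K.+1) p j)
   <= \sum_(1 <= i < K) (zvec N q i / \sum_(i <= j < K.+1) q j).
  by rewrite mulr_sumr; apply: ler_sum_nat => i hi; apply: hterm.
have hSum0 : 0 <= \sum_(1 <= i < K) (zvec N p i / \sum_(i <= j < K.+1) p j).
  rewrite big_nat_cond; apply: sumr_ge0 => i /andP[hi _].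
  apply: divr_ge0; first exact: hzp.
  rewrite hDp; last by nlia.
  have /andP[_ h] := hSp i ltac:(nlia).
  lra.
have hzpK : zvec N p K = 1 - u ^+ N by rewrite /zvec hsum expr1n.
have hzqK : zvec N q K = 1 - U ^+ N by rewrite /zvec hqtot hqs // -/u hlu expr1n.
rewrite /fobj hzpK hzqK hqK -/t.
apply: (le_trans (y := (s / (1 - U ^+ N) * lam ^+ N) *
   \sum_(1 <= i < K) (zvec N p i / \sum_(i <= j < K.+1) p j))).
  apply: ler_wpM2r => //.
  have c := @coef R N u U hN hu0 huU hU1.
  have e1 : 1 - u = t by rewrite -hut addrC addKr.
  have e2 : 1 - U = s by rewrite /U opprB addrC subrK.
  by rewrite e1 e2 in c.
rewrite -mulrA; apply: ler_wpM2l => //.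
apply: divr_ge0; first exact: ltW.
rewrite subr_ge0; apply: exprn_ile1; exact: ltW.
Qed.

Local Open Scope classical_set_scope.

Theorem lemma4 (R : realType) (r : R) (N K : nat)
  (hr : 1 < r) (hN : (1 <= N)%N) (hK : (2 <= K)%N) :
  ereal_sup [set (fobj N K p)%:E | p in feas_ge r K] =
  ereal_sup [set (fobj N K p)%:E | p in feas_eq r K].
Proof.
apply/eqP; rewrite eq_le; apply/andP; split.
  apply: ge_ereal_sup => _ [p hp <-].
  have [q hq hpq] := @key R r N K hr hN hK p hp.
  apply: (@le_trans _ _ (fobj N K q)%:E); first by rewrite lee_fin.
  by apply: ereal_sup_ubound; exists q.
apply: le_ereal_sup => _ [p hp <-]; exists p => //.
by case: hp => h1 [h2 h3]; split; [rewrite h1 | split].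
Qed.
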